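(* Let $s\ge0$, $p\in[1,+\infty)$, $\beta\in\mathbb R\setminus\{0\}$, $\varepsilon\in(0,1)$ and $f\in B^{s,\infty}_p(\mathbb R^d)$. Then $$E(\beta,f)\subset\left\{x\in\mathbb R^d:\ \liminf_{j\to+\infty}\ \sup_{l\in[(1-\varepsilon)j,(1+\varepsilon)j]\cap\mathbb N}\frac{\log|Q_lf(x)|}{j\log2}\ge\beta\right\}.$$
   Context: Standing setup. $(V_j)_{j\in\mathbb Z}$ is an orthogonal multiresolution analysis of $L^2(\mathbb R^d)$ with scaling function $\varphi$ (the integer translates of $\varphi$ form an orthonormal basis of $V_0$), and $\psi^{(1)},\dots,\psi^{(2^d-1)}$ are associated wavelets: the functions $2^{dj/2}\psi^{(i)}(2^j\cdot-k)$ form an orthonormal basis of $L^2(\mathbb R^d)$. The functions $\varphi,\psi^{(i)}$ are smooth, with fast decay: for every $N\ge0$ there is $C_N$ with $|\psi^{(i)}(x)|\le C_N(1+\|x\|)^{-N}$. For $j\ge0$, $k\in\mathbb Z^d$, the dyadic cube $\lambda=(j,k)$ is $\prod_{m=1}^d[k_m2^{-j},(k_m+1)2^{-j})$; $\Lambda_j$ is the set of such cubes; $\psi^{(i)}_\lambda(x)=\psi^{(i)}(2^jx-k)$. For $f$ set $C_k=\int\overline{\varphi(x-k)}f$, $c^{(i)}_\lambda=2^{dj}\int\overline{\psi^{(i)}_\lambda}f$, $Q_lf(x)=\sum_i\sum_{\lambda\in\Lambda_l}c^{(i)}_\lambda\psi^{(i)}_\lambda(x)$, $P_jf(x)=\sum_kC_k\varphi(x-k)+\sum_{0\le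 l<j}Q_lf(x)$, and when $(P_jf(x))_j$ converges $R_jf(x)=\sum_{l\ge j}Q_lf(x)$. $B^{s,\infty}_p(\mathbb R^d)$ is the set of $f$ with $(C_k)\in\ell^p$ and $\sup_{j}2^{(s-d/p)j}(\sum_i\sum_{\lambda\in\Lambda_j}|c^{(i)}_\lambda|^p)^{1/p}<\infty$. Level set (with $\log0=-\infty$): for $\beta>0$, $E(\beta,f)=\{x:\lim_j\frac{\log|P_jf(x)|}{j\log2}=\beta\}$; for $\beta<0$, $E(\beta,f)=\{x:(P_jf(x))_j\text{ converges and }\lim_j\frac{\log|R_jf(x)|}{j\log2}=\beta\}$. *)

(* Defs.v *)
From Stdlib Require Import Reals Lra Lia ZArith List ClassicalEpsilon.
Import ListNotations.
Open Scope R_scope.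

Definition Cx : Type := (R * R)%type.
Definition C0 : Cx := (0, 0).
Definition Cadd (a b : Cx) : Cx := (fst a + fst b, snd a + snd b).
Definition Cmul (a b : Cx) : Cx :=
  (fst a * fst b - snd a * snd b, fst a * snd b + snd a * fst b).
Definition Cnorm (a : Cx) : R := sqrt (fst a ^ 2 + snd a ^ 2).

Definition Ccv (u : nat -> Cx) (L : Cx) : Prop :=
  Un_cv (fun n => fst (u n)) (fst L) /\ Un_cv (fun n => snd (u n)) (snd L).
Definition Rlim (u : nat -> R) : R :=
  epsilon (inhabits 0) (fun L => Un_cv u L).
Definition Clim (u : nat -> Cx) : Cx :=
  (Rlim (fun n => fst (u n)), Rlim (fun n => snd (u n))).

Definition Csum_range (n : nat) (F : nat -> Cx) : Cx :=
  fold_right (fun i acc => Cadd (F i) acc) C0 (seq 0 n).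
Definition Rsum_range (n : nat) (F : nat -> R) : R :=
  fold_right (fun i acc => F i + acc) 0 (seq 0 n).

(** Points of R^d are x : nat -> R with x m = 0 for m >= d;
    points of Z^d are k : nat -> Z (only coordinates m < d are used). *)
Definition inRd (d : nat) (x : nat -> R) : Prop :=
  forall m, (d <= m)%nat -> x m = 0.
Definition eucl_norm (d : nat) (x : nat -> R) : R :=
  sqrt (Rsum_range d (fun m => x m ^ 2)).

(** Sums over the box {-N,...,N}^d of Z^d (coordinates >= d are 0). *)
Fixpoint box_sum (d N : nat) (F : (nat -> Z) -> Cx) : Cx :=
  match d with
  | O => F (fun _ => 0%Z)
  | S d' => Csum_range (2 * N + 1) (fun n =>
      box_sum d' N (fun k => F (fun m =>
        if Nat.eqb m d' then (Z.of_nat n - Z.of_nat N)%Z else k m)))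
  end.
Fixpoint box_sumR (d N : nat) (F : (nat -> Z) -> R) : R :=
  match d with
  | O => F (fun _ => 0%Z)
  | S d' => Rsum_range (2 * N + 1) (fun n =>
      box_sumR d' N (fun k => F (fun m =>
        if Nat.eqb m d' then (Z.of_nat n - Z.of_nat N)%Z else k m)))
  end.

Definition zd_series (d : nat) (F : (nat -> Z) -> Cx) : Cx :=
  Clim (fun N => box_sum d N F).

Definition dil (j : nat) (x : nat -> R) (k : nat -> Z) : nat -> R :=
  fun m => 2 ^ j * x m - IZR (k m).

Definition rpow_nn (a q : R) : R := if Rle_dec a 0 then 0 else Rpower a q.

Definition fast_decay (d : nat) (g : (nat -> R) -> Cx) : Prop :=
  forall N : nat, exists CN : R, forall x, inRd d x ->
    Cnorm (g x) <= CN * / (1 + eucl_norm d x) ^ N.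

(** Data: scaling function phi, wavelets psi i (i = 1..2^d-1),
    coefficients Cc k = C_k and c i j k = c^{(i)}_{(j,k)}. *)

Definition Qf (d : nat) (psi : nat -> (nat -> R) -> Cx)
  (c : nat -> nat -> (nat -> Z) -> Cx) (l : nat) (x : nat -> R) : Cx :=
  Csum_range (2 ^ d - 1) (fun i =>
    zd_series d (fun k => Cmul (c (S i) l k) (psi (S i) (dil l x k)))).

Definition Pf (d : nat) (phi : (nat -> R) -> Cx) (psi : nat -> (nat -> R) -> Cx)
  (Cc : (nat -> Z) -> Cx) (c : nat -> nat -> (nat -> Z) -> Cx)
  (j : nat) (x : nat -> R) : Cx :=
  Cadd (zd_series d (fun k => Cmul (Cc k) (phi (dil 0 x k))))
       (Csum_range j (fun l => Qf d psi c l x)).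

Definition Rf (d : nat) (psi : nat -> (nat -> R) -> Cx)
  (c : nat -> nat -> (nat -> Z) -> Cx) (j : nat) (x : nat -> R) : Cx :=
  Clim (fun N => Csum_range N (fun n => Qf d psi c (j + n) x)).

(** Membership of f in B^{s,infty}_p, expressed on its coefficients. *)
Definition besov_coeffs (d : nat) (s p : R) (Cc : (nat -> Z) -> Cx)
  (c : nat -> nat -> (nat -> Z) -> Cx) : Prop :=
  (exists M, forall N, box_sumR d N (fun k => rpow_nn (Cnorm (Cc k)) p) <= M) /\
  (exists M, forall (j N : nat),
     Rpower 2 ((s - INR d / p) * INR j) *
     rpow_nn (Rsum_range (2 ^ d - 1) (fun i =>
                box_sumR d N (fun k => rpow_nn (Cnorm (c (S i) j k)) p))) (1 / p)
     <= M).

(** log|z| / (j log 2), used only when z <> 0. *)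
Definition log2ratio (z : Cx) (j : nat) : R := ln (Cnorm z) / (INR j * ln 2).

(** lim_j log|u_j|/(j log 2) = b (b finite, log 0 = -infty). *)
Definition lim_log2ratio_eq (u : nat -> Cx) (b : R) : Prop :=
  forall eta, 0 < eta -> exists J : nat, forall j, (J <= j)%nat ->
    Cnorm (u j) <> 0 /\ Rabs (log2ratio (u j) j - b) < eta.

Definition E_set (d : nat) (phi : (nat -> R) -> Cx) (psi : nat -> (nat -> R) -> Cx)
  (Cc : (nat -> Z) -> Cx) (c : nat -> nat -> (nat -> Z) -> Cx)
  (beta : R) (x : nat -> R) : Prop :=
  (0 < beta /\ lim_log2ratio_eq (fun j => Pf d phi psi Cc c j x) beta) \/
  (beta < 0 /\ (exists L, Ccv (fun j => Pf d phi psi Cc c j x) L) /\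
     lim_log2ratio_eq (fun j => Rf d psi c j x) beta).

(** liminf_j sup_{l in [(1-eps)j,(1+eps)j] cap N} log|u_l|/(j log 2) >= beta
    (log 0 = -infty). *)
Definition liminf_window_ge (u : nat -> Cx) (eps beta : R) : Prop :=
  forall eta, 0 < eta -> exists J : nat, forall j, (J <= j)%nat ->
    exists l : nat, (1 - eps) * INR j <= INR l <= (1 + eps) * INR j /\
      Cnorm (u l) <> 0 /\ beta - eta <= log2ratio (u l) j.

(* Main.v *)
Require Import Defs.
From Stdlib Require Import Reals Lra Lia ZArith List ClassicalEpsilon.
From Coquelicot Require Import Complex.
Import ListNotations.
Open Scope R_scope.

Lemma ln2_pos : 0 < ln 2.
Proof. rewrite <- ln_1. apply ln_increasing; lra. Qed.

Lemma Cnorm_tri (X Y Z : Cx) : fst X = fst Y + fst Z -> snd X = snd Y + snd Z ->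
  Cnorm X <= Cnorm Y + Cnorm Z.
Proof.
  intros H1 H2. destruct X as [x1 x2]. simpl in H1, H2. subst.
  pose proof (Cmod_triangle Y Z) as H. unfold Cmod, Cplus in H. unfold Cnorm. simpl. exact H.
Qed.

Fixpoint tsum (f : nat -> R) (a n : nat) : R :=
  match n with O => 0 | S n => tsum f a n + f (a+n)%nat end.

Lemma tele_up (U Q : nat -> Cx) : (forall l, Cnorm (U (S l)) <= Cnorm (U l) + Cnorm (Q l)) ->
  forall a n, Cnorm (U (a+n)%nat) <= Cnorm (U a) + tsum (fun l => Cnorm (Q l)) a n.
Proof. intros H a n; induction n; simpl. rewrite Nat.add_0_r; lra.
  rewrite <- plus_n_Sm. specialize (H (a+n)%nat). lra. Qed.

Lemma tele_down (U Q : nat -> Cx) : (forall l, Cnorm (U l) <= Cnorm (U (S l)) + Cnorm (Q l)) ->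
  forall a n, Cnorm (U a) <= Cnorm (U (a+n)%nat) + tsum (fun l => Cnorm (Q l)) a n.
Proof. intros H a n; induction n; simpl. rewrite Nat.add_0_r; lra.
  rewrite <- plus_n_Sm. specialize (H (a+n)%nat). lra. Qed.

Lemma tsum_big f a n T : INR n * T < tsum f a n -> exists i, (i < n)%nat /\ T < f (a+i)%nat.
Proof.
  induction n; intros H; cbn [tsum] in H. simpl in H. lra.
  destruct (Rlt_le_dec T (f (a+n)%nat)) as [h|h]. exists n; split; [lia|exact h].
  destruct IHn as [i [Hi Hi2]]. rewrite S_INR in H. lra. exists i; split; [lia|exact Hi2].
Qed.

Lemma ratio_bounds (z : Cx) (m : nat) (b th : R) : (0 < m)%nat -> Cnorm z <> 0 ->
  Rabs (log2ratio z m - b) < th ->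
  exp ((b - th) * INR m * ln 2) < Cnorm z < exp ((b + th) * INR m * ln 2).
Proof.
  intros Hm Hz Hr. pose proof ln2_pos.
  assert (HD : 0 < INR m * ln 2) by (apply Rmult_lt_0_compat; [apply lt_0_INR; lia|lra]).
  assert (Hc : 0 < Cnorm z) by (pose proof (sqrt_pos (fst z ^ 2 + snd z ^ 2)); unfold Cnorm in *; lra).
  unfold log2ratio in Hr. set (r := ln (Cnorm z) / (INR m * ln 2)) in Hr.
  assert (Hl : ln (Cnorm z) = r * (INR m * ln 2)) by (unfold r, Rdiv; rewrite Rmult_assoc, Rinv_l; lra).
  apply Rabs_def2 in Hr. rewrite <- (exp_ln (Cnorm z)) by lra. rewrite Hl.
  split; apply exp_increasing; rewrite !Rmult_assoc; apply Rmult_lt_compat_r; lra.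
Qed.

Lemma ratio_lower (z : Cx) (j : nat) (c : R) : (0 < j)%nat ->
  exp (c * INR j * ln 2) < Cnorm z -> Cnorm z <> 0 /\ c <= log2ratio z j.
Proof.
  intros Hj H. pose proof ln2_pos. pose proof (exp_pos (c * INR j * ln 2)).
  assert (HD : 0 < INR j * ln 2) by (apply Rmult_lt_0_compat; [apply lt_0_INR; lia|lra]).
  split. lra.
  apply ln_increasing in H; [|assumption]. rewrite ln_exp in H.
  unfold log2ratio. apply Rmult_le_reg_r with (INR j * ln 2); [exact HD|].
  unfold Rdiv. rewrite Rmult_assoc, Rinv_l by lra. lra.
Qed.

Lemma floor_nat r : 0 <= r -> exists n:nat, INR n <= r < INR n + 1.
Proof.
  intros Hr. destruct (archimed r) as [h1 h2].
  assert (Hp : (0 < up r)%Z) by (apply lt_0_IZR; lra).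
  exists (Z.to_nat (up r - 1)). rewrite INR_IZR_INZ, Z2Nat.id by lia.
  rewrite minus_IZR. simpl. lra.
Qed.

Lemma ceil_nat r : 0 <= r -> exists n:nat, r < INR n <= r + 1.
Proof. intros Hr. destruct (floor_nat r Hr) as [n Hn]. exists (S n). rewrite S_INR. lra. Qed.

Lemma ev_ge r : exists N:nat, forall j, (N <= j)%nat -> r <= INR j.
Proof.
  destruct (ceil_nat (Rabs r) (Rabs_pos r)) as [N HN]. exists N. intros j Hj.
  apply le_INR in Hj. pose proof (Rle_abs r). lra.
Qed.

Lemma ev_exp K d : 0 < d -> exists N:nat, forall j, (N<=j)%nat -> K * INR j < exp (d * INR j).
Proof.
  intros Hd. destruct (ev_ge (4 * Rabs K / (d*d) + 1)) as [N HN]. exists N. intros j Hj.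
  specialize (HN j Hj). set (x := INR j) in *.
  assert (Hx0 : 0 <= 4 * Rabs K / (d*d)).
  { unfold Rdiv. apply Rmult_le_pos. pose proof (Rabs_pos K); lra. left; apply Rinv_0_lt_compat; nra. }
  assert (H4 : 4 * Rabs K <= x * (d*d)).
  { replace (4 * Rabs K) with (4 * Rabs K / (d*d) * (d*d)) by (field; lra).
    apply Rmult_le_compat_r; nra. }
  assert (He : 1 + d * x / 2 < exp (d * x / 2)) by (apply exp_ineq1; nra).
  replace (d * x) with (d * x / 2 + d * x / 2) by field. rewrite exp_plus.
  pose proof (Rle_abs K). set (e := exp (d * x / 2)) in *.
  assert (hx : 1 <= x) by lra.
  assert (h1 : 0 < d * x / 2) by nra.
  assert (h2 : (d*x/2) * (d*x/2) < e * e) by (apply Rmult_le_0_lt_compat; lra).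
  assert (h3 : K * x <= Rabs K * x) by nra.
  assert (h4 : Rabs K * x <= (d*x/2)*(d*x/2)) by nra.
  lra.
Qed.

Lemma ev_num p1 q1 p2 q2 c : p2 < p1 -> c < p1 -> exists N:nat, forall j, (N<=j)%nat ->
  (p1-p2)*INR j + (q1-q2) >= 1 /\ 4*INR j*exp(c*INR j*ln 2) < exp((p1*INR j+q1)*ln 2).
Proof.
  intros H12 Hc. pose proof ln2_pos.
  destruct (ev_ge ((1 - (q1-q2))/(p1-p2))) as [N1 HN1].
  destruct (ev_exp (4*exp(-q1*ln 2)) ((p1-c)*ln 2)) as [N2 HN2]. nra.
  exists (N1+N2)%nat. intros j Hj. split.
  - assert (Hj1 : (N1 <= j)%nat) by lia; specialize (HN1 j Hj1).
    assert (H1 : ((1 - (q1-q2))/(p1-p2)) * (p1 - p2) <= INR j * (p1-p2)) by (apply Rmult_le_compat_r; lra).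
    replace (((1 - (q1-q2))/(p1-p2)) * (p1 - p2)) with (1 - (q1-q2)) in H1 by (field; lra). lra.
  - assert (Hj2 : (N2 <= j)%nat) by lia; specialize (HN2 j Hj2).
    assert (Hpos : 0 < exp (c * INR j * ln 2) * exp (q1 * ln 2)) by (apply Rmult_lt_0_compat; apply exp_pos).
    apply (Rmult_lt_compat_r _ _ _ Hpos) in HN2.
    replace ((p1*INR j+q1)*ln 2) with ((p1-c)*ln 2 * INR j + c * INR j * ln 2 + q1 * ln 2) by ring.
    rewrite !exp_plus.
    replace (4 * INR j * exp (c * INR j * ln 2)) with
      (4 * exp (- q1 * ln 2) * INR j * (exp (c * INR j * ln 2) * exp (q1 * ln 2))).
    lra.
    replace (4 * exp (- q1 * ln 2) * INR j * (exp (c * INR j * ln 2) * exp (q1 * ln 2))) with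
      (4 * INR j * exp (c * INR j * ln 2) * (exp (- q1 * ln 2) * exp (q1 * ln 2))) by ring.
    rewrite <- exp_plus. replace (- q1 * ln 2 + q1 * ln 2) with 0 by ring. rewrite exp_0. ring.
Qed.

Lemma gap (Big Small n j T p1 q1 p2 q2 : R) : 0<T -> 0 <= n <= 2*j ->
  exp((p1*j+q1)*ln 2) < Big -> Small < exp((p2*j+q2)*ln 2) ->
  (p1-p2)*j+(q1-q2) >= 1 -> 4*j*T < exp((p1*j+q1)*ln 2) -> n*T < Big - Small.
Proof.
  intros HT Hn HB HS Hg H4. pose proof ln2_pos.
  assert (exp((p2*j+q2)*ln 2) * 2 <= exp((p1*j+q1)*ln 2)).
  { rewrite <- (exp_ln 2) at 2 by lra. rewrite <- exp_plus.
    assert (h : (p2*j+q2)*ln 2 + ln 2 <= (p1*j+q1)*ln 2) by nra.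
    destruct h as [h|h]; [left; apply exp_increasing; exact h| rewrite h; lra]. }
  assert (n * T <= 2 * j * T) by nra. lra.
Qed.

Lemma exp_le_mono x y : x <= y -> exp x <= exp y.
Proof. intros [h|h]; [left; apply exp_increasing; exact h| rewrite h; lra]. Qed.

Lemma core_pos (V Q : nat -> Cx) beta eps :
  0 < beta -> 0 < eps < 1 -> lim_log2ratio_eq V beta ->
  (forall l, Cnorm (V (S l)) <= Cnorm (V l) + Cnorm (Q l)) ->
  liminf_window_ge Q eps beta.
Proof.
  intros Hbe He HV Hst eta Heta. pose proof ln2_pos.
  set (th := beta*eps/2).
  assert (Hth : 0 < th) by (unfold th; nra).
  destruct (HV th Hth) as [JV HJV].
  set (p1 := (beta - th)*(1+eps)). set (q1 := -(beta-th)).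
  set (p2 := (beta+th)*(1-eps)). set (q2 := beta+th).
  destruct (ev_num p1 q1 p2 q2 (beta-eta)) as [N1 HN1]; [unfold p1,p2,th; nra | unfold p1, th; assert (0 < beta*eps*(1-eps)) by (apply Rmult_lt_0_compat; nra); nra|].
  destruct (ev_ge (Rmax (1/eps) ((INR JV + 1)/(1-eps)))) as [N2 HN2].
  exists (N1+N2+1)%nat. intros j Hj.
  destruct (HN1 j) as [Hg H4]; [lia|].
  assert (Hj2 : (N2 <= j)%nat) by lia. pose proof (HN2 j Hj2) as Hr.
  assert (Hx1 : 1 <= INR j) by (replace 1 with (INR 1) by reflexivity; apply le_INR; lia).
  set (x := INR j) in *.
  assert (Hex : 1 <= eps * x).
  { pose proof (Rmax_l (1/eps) ((INR JV + 1)/(1-eps))).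
    assert (h : 1/eps * eps <= x * eps) by (apply Rmult_le_compat_r; lra).
    replace (1/eps*eps) with 1 in h by (field; lra). lra. }
  assert (HJx : INR JV + 1 <= (1-eps) * x).
  { pose proof (Rmax_r (1/eps) ((INR JV + 1)/(1-eps))).
    assert (h : (INR JV + 1)/(1-eps) * (1-eps) <= x * (1-eps)) by (apply Rmult_le_compat_r; lra).
    replace ((INR JV + 1)/(1-eps) * (1-eps)) with (INR JV + 1) in h by (field; lra). lra. }
  destruct (ceil_nat ((1-eps)*x)) as [a Ha]; [nra|].
  destruct (floor_nat ((1+eps)*x)) as [b Hb']; [nra|].
  assert (Hab : (a < b)%nat) by (apply INR_lt; lra).
  assert (HJa : (JV < a)%nat) by (apply INR_lt; lra).
  destruct (HJV a) as [Ha0 Ha1]; [lia|]. destruct (HJV b) as [Hb0 Hb1]; [lia|].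
  assert (Ha' : (0 < a)%nat) by lia. assert (Hb'' : (0 < b)%nat) by lia.
  pose proof (ratio_bounds _ _ _ _ Ha' Ha0 Ha1) as [_ HA].
  pose proof (ratio_bounds _ _ _ _ Hb'' Hb0 Hb1) as [HB _].
  set (T := exp((beta-eta)*x*ln 2)) in *.
  pose proof (tele_up V Q Hst a (b-a)) as Htel. replace (a + (b-a))%nat with b in Htel by lia.
  assert (Hsum : INR (b-a) * T < tsum (fun l => Cnorm (Q l)) a (b-a)).
  { assert (INR (b-a) * T < Cnorm (V b) - Cnorm (V a)); [|lra].
    apply (gap _ _ _ x T p1 q1 p2 q2).
    - apply exp_pos.
    - rewrite minus_INR by lia. split; [pose proof (lt_INR a b Hab); lra|]. nra.
    - eapply Rle_lt_trans; [|exact HB]. apply exp_le_mono.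
      apply Rmult_le_compat_r; [lra|]. unfold p1, q1. replace ((beta-th)*(1+eps)*x + -(beta-th)) with ((beta-th)*((1+eps)*x - 1)) by ring. apply Rmult_le_compat_l; [unfold th; nra| lra].
    - eapply Rlt_le_trans; [exact HA|]. apply exp_le_mono.
      apply Rmult_le_compat_r; [lra|]. unfold p2, q2. replace ((beta+th)*(1-eps)*x + (beta+th)) with ((beta+th)*((1-eps)*x+1)) by ring. apply Rmult_le_compat_l; [unfold th; nra| lra].
    - exact Hg.
    - exact H4. }
  destruct (tsum_big _ _ _ _ Hsum) as [i [Hi HiT]].
  exists (a+i)%nat. split.
  - rewrite plus_INR; split. pose proof (pos_INR i); lra.
    apply Rle_trans with (INR b); [rewrite <- plus_INR; apply le_INR; lia| lra].
  - apply ratio_lower. lia. exact HiT.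
Qed.

Lemma core_neg (V Q : nat -> Cx) beta eps :
  beta < 0 -> 0 < eps < 1 -> lim_log2ratio_eq V beta ->
  (forall l, Cnorm (V l) <= Cnorm (V (S l)) + Cnorm (Q l)) ->
  liminf_window_ge Q eps beta.
Proof.
  intros Hbe He HV Hst eta Heta. pose proof ln2_pos.
  set (th := - beta*eps/2).
  assert (Hth : 0 < th) by (unfold th; nra).
  destruct (HV th Hth) as [JV HJV].
  set (p1 := (beta - th)*(1-eps)). set (q1 := beta-th).
  set (p2 := (beta+th)*(1+eps)). set (q2 := -(beta+th)).
  destruct (ev_num p1 q1 p2 q2 (beta-eta)) as [N1 HN1]; [unfold p1,p2,th; nra | unfold p1, th; assert (0 < -beta*eps*(1+eps)) by (apply Rmult_lt_0_compat; nra); nra|].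
  destruct (ev_ge (Rmax (1/eps) ((INR JV + 1)/(1-eps)))) as [N2 HN2].
  exists (N1+N2+1)%nat. intros j Hj.
  destruct (HN1 j) as [Hg H4]; [lia|].
  assert (Hj2 : (N2 <= j)%nat) by lia. pose proof (HN2 j Hj2) as Hr.
  assert (Hx1 : 1 <= INR j) by (replace 1 with (INR 1) by reflexivity; apply le_INR; lia).
  set (x := INR j) in *.
  assert (Hex : 1 <= eps * x).
  { pose proof (Rmax_l (1/eps) ((INR JV + 1)/(1-eps))).
    assert (h : 1/eps * eps <= x * eps) by (apply Rmult_le_compat_r; lra).
    replace (1/eps*eps) with 1 in h by (field; lra). lra. }
  assert (HJx : INR JV + 1 <= (1-eps) * x).
  { pose proof (Rmax_r (1/eps) ((INR JV + 1)/(1-eps))).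
    assert (h : (INR JV + 1)/(1-eps) * (1-eps) <= x * (1-eps)) by (apply Rmult_le_compat_r; lra).
    replace ((INR JV + 1)/(1-eps) * (1-eps)) with (INR JV + 1) in h by (field; lra). lra. }
  destruct (ceil_nat ((1-eps)*x)) as [a Ha]; [nra|].
  destruct (floor_nat ((1+eps)*x)) as [b Hb']; [nra|].
  assert (Hab : (a < b)%nat) by (apply INR_lt; lra).
  assert (HJa : (JV < a)%nat) by (apply INR_lt; lra).
  destruct (HJV a) as [Ha0 Ha1]; [lia|]. destruct (HJV b) as [Hb0 Hb1]; [lia|].
  assert (Ha' : (0 < a)%nat) by lia. assert (Hb'' : (0 < b)%nat) by lia.
  pose proof (ratio_bounds _ _ _ _ Ha' Ha0 Ha1) as [HA _].
  pose proof (ratio_bounds _ _ _ _ Hb'' Hb0 Hb1) as [_ HB].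
  set (T := exp((beta-eta)*x*ln 2)) in *.
  pose proof (tele_down V Q Hst a (b-a)) as Htel. replace (a + (b-a))%nat with b in Htel by lia.
  assert (Hsum : INR (b-a) * T < tsum (fun l => Cnorm (Q l)) a (b-a)).
  { assert (INR (b-a) * T < Cnorm (V a) - Cnorm (V b)); [|lra].
    apply (gap _ _ _ x T p1 q1 p2 q2).
    - apply exp_pos.
    - rewrite minus_INR by lia. split; [pose proof (lt_INR a b Hab); lra|]. nra.
    - eapply Rle_lt_trans; [|exact HA]. apply exp_le_mono.
      apply Rmult_le_compat_r; [lra|]. unfold p1, q1. replace ((beta-th)*(1-eps)*x + (beta-th)) with ((beta-th)*((1-eps)*x + 1)) by ring. apply Rmult_le_compat_neg_l; [unfold th; nra| lra].
    - eapply Rlt_le_trans; [exact HB|]. apply exp_le_mono.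
      apply Rmult_le_compat_r; [lra|]. unfold p2, q2. replace ((beta+th)*(1+eps)*x + -(beta+th)) with ((beta+th)*((1+eps)*x-1)) by ring. apply Rmult_le_compat_neg_l; [unfold th; nra| lra].
    - exact Hg.
    - exact H4. }
  destruct (tsum_big _ _ _ _ Hsum) as [i [Hi HiT]].
  exists (a+i)%nat. split.
  - rewrite plus_INR; split. pose proof (pos_INR i); lra.
    apply Rle_trans with (INR b); [rewrite <- plus_INR; apply le_INR; lia| lra].
  - apply ratio_lower. lia. exact HiT.
Qed.

Lemma fold_C_fst (F : nat -> Cx) z s : fst (fold_right (fun i acc => Cadd (F i) acc) z s) =
  fst (fold_right (fun i acc => Cadd (F i) acc) C0 s) + fst z.
Proof. induction s; simpl. unfold C0; simpl; ring. rewrite IHs; ring. Qed.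
Lemma fold_C_snd (F : nat -> Cx) z s : snd (fold_right (fun i acc => Cadd (F i) acc) z s) =
  snd (fold_right (fun i acc => Cadd (F i) acc) C0 s) + snd z.
Proof. induction s; simpl. unfold C0; simpl; ring. rewrite IHs; ring. Qed.

Lemma fst_Cadd a b : fst (Cadd a b) = fst a + fst b. Proof. reflexivity. Qed.
Lemma snd_Cadd a b : snd (Cadd a b) = snd a + snd b. Proof. reflexivity. Qed.

Lemma Csum_S_fst n F : fst (Csum_range (S n) F) = fst (Csum_range n F) + fst (F n).
Proof. unfold Csum_range. rewrite seq_S, fold_right_app, fold_C_fst. simpl. ring. Qed.
Lemma Csum_S_snd n F : snd (Csum_range (S n) F) = snd (Csum_range n F) + snd (F n).
Proof. unfold Csum_range. rewrite seq_S, fold_right_app, fold_C_snd. simpl. ring. Qed.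

Lemma Csum_shift_fst (Q : nat -> Cx) l N :
  fst (Csum_range N (fun n => Q (l+n)%nat)) = fst (Csum_range (l+N) Q) - fst (Csum_range l Q).
Proof.
  induction N. rewrite Nat.add_0_r. simpl. ring.
  rewrite Csum_S_fst, IHN, <- plus_n_Sm, Csum_S_fst. ring.
Qed.
Lemma Csum_shift_snd (Q : nat -> Cx) l N :
  snd (Csum_range N (fun n => Q (l+n)%nat)) = snd (Csum_range (l+N) Q) - snd (Csum_range l Q).
Proof.
  induction N. rewrite Nat.add_0_r. simpl. ring.
  rewrite Csum_S_snd, IHN, <- plus_n_Sm, Csum_S_snd. ring.
Qed.

Lemma cv_shift (u w : nat -> R) L l c : Un_cv u L -> (forall N, w N = u (l+N)%nat - c) ->
  Un_cv w (L - c).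
Proof.
  intros H Hw e He. destruct (H e He) as [N HN]. exists N. intros n Hn.
  unfold R_dist. rewrite Hw. replace (u (l+n)%nat - c - (L - c)) with (u (l+n)%nat - L) by ring.
  apply HN. lia.
Qed.

Lemma Rlim_eq u l : Un_cv u l -> Rlim u = l.
Proof.
  intros H. unfold Rlim. apply (UL_sequence u).
  apply (epsilon_spec (inhabits 0) (fun L => Un_cv u L)). exists l; exact H. exact H.
Qed.

Theorem lemma3p4 (d : nat) (Hd : (1 <= d)%nat)
  (phi : (nat -> R) -> Cx) (psi : nat -> (nat -> R) -> Cx)
  (Hphi : fast_decay d phi)
  (Hpsi : forall i, (1 <= i <= 2 ^ d - 1)%nat -> fast_decay d (psi i))
  (s p beta eps : R) (Cc : (nat -> Z) -> Cx) (c : nat -> nat -> (nat -> Z) -> Cx)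
  (Hs : 0 <= s) (Hp : 1 <= p) (Hbeta : beta <> 0) (Heps : 0 < eps < 1)
  (Hf : besov_coeffs d s p Cc c) :
  forall x : nat -> R, inRd d x ->
    E_set d phi psi Cc c beta x ->
    liminf_window_ge (fun l => Qf d psi c l x) eps beta.
Proof.
  intros x Hx HE.
  set (Q := fun l => Qf d psi c l x).
  set (P := fun j => Pf d phi psi Cc c j x).
  assert (HPf : forall l, fst (P (S l)) = fst (P l) + fst (Q l)).
  { intros l. unfold P, Pf, Cadd. cbn [fst]. rewrite Csum_S_fst. unfold Q. ring. }
  assert (HPs : forall l, snd (P (S l)) = snd (P l) + snd (Q l)).
  { intros l. unfold P, Pf, Cadd. cbn [snd]. rewrite Csum_S_snd. unfold Q. ring. }
  destruct HE as [[Hb Hlim]|[Hb [[L [HL1 HL2]] Hlim]]].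
  - apply (core_pos P Q beta eps Hb Heps Hlim).
    intros l. apply Cnorm_tri; auto.
  - set (V := fun j => Rf d psi c j x).
    assert (HVf : forall l, fst (V l) = fst L - fst (P l)).
    { intros l. unfold V, Rf, Clim. simpl fst. apply Rlim_eq.
      apply (cv_shift (fun j => fst (P j)) _ _ l); [exact HL1|].
      intros N. pose proof (Csum_shift_fst Q l N) as E. unfold Q in E. simpl in E. cbv beta. rewrite E. unfold P, Pf. rewrite !fst_Cadd. unfold zd_series, Clim. cbn [fst]. ring. }
    assert (HVs : forall l, snd (V l) = snd L - snd (P l)).
    { intros l. unfold V, Rf, Clim. simpl snd. apply Rlim_eq.
      apply (cv_shift (fun j => snd (P j)) _ _ l); [exact HL2|].
      intros N. pose proof (Csum_shift_snd Q l N) as E. unfold Q in E. simpl in E. cbv beta. rewrite E. unfold P, Pf. rewrite !snd_Cadd. unfold zd_series, Clim. cbn [snd]. ring. }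
    apply (core_neg V Q beta eps Hb Heps Hlim).
    intros l. apply Cnorm_tri.
    + rewrite !HVf, HPf. ring.
    + rewrite !HVs, HPs. ring.
Qed.
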